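(* Consider any sequences $\{(x_k,y_k,\gamma_k)\}_{k\ge0}$, $\{(\tilde x_k,u_k,\tilde\gamma_k)\}_{k\ge1}$ generated by the inexact symmetric proximal ADMM described in the context, and let $z_k=(x_k,y_k,\gamma_k)$ ($k\ge0$), $\tilde z_k=(\tilde x_k,y_k,\tilde\gamma_k)$ and $q_k=-\beta(A\tilde x_k+By_k-b)$ ($k\ge1$). Let $\sigma\in[\hat\sigma,1)$ be a scalar with $\varphi(\sigma)\ge0$, $\widehat\varphi(\sigma)\ge0$, $\widetilde\varphi(\sigma)>0$, $\overline\varphi(\sigma)\ge0$ (such $\sigma$ exists). Define $$\eta_0=\frac{4(1+\tau+\vartheta)\varphi(\sigma)}{(\tau+\theta)(1+\tau)\vartheta}d_0,\qquad \eta_k=\frac{\widetilde\varphi(\sigma)}{(\tau+\theta)\beta}\|q_k\|^2+\frac{\varphi(\sigma)}{(\tau+\theta)(1+\tau)}\|y_k-y_{k-1}\|_H^2\quad(k\ge1).$$ Then for every $k\ge1$, $$\|\tilde z_k-z_k\|_M^2+\eta_k\le\sigma\|\tilde z_k-z_{k-1}\|_M^2+\eta_{k-1}.$$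
   Context: Let $f:\mathbb{R}^n\to(-\infty,\infty]$ and $g:\mathbb{R}^p\to(-\infty,\infty]$ be proper closed convex functions, $A\in\mathbb{R}^{m\times n}$, $B\in\mathbb{R}^{m\times p}$, $b\in\mathbb{R}^m$ (problem: $\min\{f(x)+g(y):Ax+By=b\}$). Standing assumption: there exists $(x^*,y^*,\gamma^* )$ solving the Lagrangian system $0\in\partial f(x)-A^*\gamma$, $0\in\partial g(y)-B^*\gamma$, $0=Ax+By-b$. Here $\partial$ is the subdifferential, $A^*$ the transpose, $\mathbb{S}^n_{++}$ ($\mathbb{S}^p_+$) the symmetric positive definite (semidefinite) matrices, and $\|z\|_Q=\sqrt{\langle Qz,z\rangle}$ for $Q$ positive semidefinite. Algorithm (inexact symmetric proximal ADMM): given $(x_0,y_0,\gamma_0)\in\mathbb{R}^n\times\mathbb{R}^p\times\mathbb{R}^m$, $\beta>0$, $\tilde\sigma,\hat\sigma\in[0,1)$, $G\in\mathbb{S}^n_{++}$, $H\in\mathbb{S}^p_+$, and $(\tau,\theta)\in\mathcal R_{\tilde\sigma}:=\{(\tau,\theta):\tau\in(-1,1-\tilde\sigma),\ \tau+\theta>0,\ (1-\tau^2)(2-\tau-\theta-\tilde\sigma)-(1-\theta)^2(1-\tau-\tilde\sigma)>0\}$. For $k=1,2,\dots$: compute $(\tilde x_k,u_k)$ with $u_k\in\partial f(\tilde x_k)-A^*\tilde\gamma_k$ and $\|\tilde x_k-x_{k-1}+G^{-1}u_k\|_G^2\le\frac{\tilde\sigma}{\beta}\|\tilde\gamma_k-\gamma_{k-1}\|^2+\hat\sigma\|\tilde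 x_k-x_{k-1}\|_G^2$, where $\tilde\gamma_k=\gamma_{k-1}-\beta(A\tilde x_k+By_{k-1}-b)$; set $\gamma_{k-1/2}=\gamma_{k-1}-\tau\beta(A\tilde x_k+By_{k-1}-b)$; let $y_k$ be an optimal solution of $\min_y\{g(y)-\langle\gamma_{k-1/2},By\rangle+\frac\beta2\|A\tilde x_k+By-b\|^2+\frac12\|y-y_{k-1}\|_H^2\}$; set $x_k=x_{k-1}-G^{-1}u_k$ and $\gamma_k=\gamma_{k-1/2}-\theta\beta(A\tilde x_k+By_k-b)$. Definitions: $T(x,y,\gamma)=(\partial f(x)-A^*\gamma,\ \partial g(y)-B^*\gamma,\ Ax+By-b)$; $M=\begin{bmatrix}G&0&0\\0&H+\frac{(\tau-\tau\theta+\theta)\beta}{\tau+\theta}B^*B&-\frac{\tau}{\tau+\theta}B^*\\0&-\frac{\tau}{\tau+\theta}B&\frac{1}{(\tau+\theta)\beta}I\end{bmatrix}$; $d_0=\inf\{\|z^*-z_0\|_M^2: z^*\in T^{-1}(0)\}$; $\vartheta=\sqrt{(3-3\tau-2\tilde\sigma)(4-\tau-\theta-2\tilde\sigma)}-2(1-\tau-\tilde\sigma)$; and for $\sigma\in\mathbb{R}$: $\varphi(\sigma)=(1-\tau)(\sigma-1)+(1-\tau-\tilde\sigma)(\tau+\theta)$, $\widehat\varphi(\sigma)=(1-\tau)[(1+\theta)\sigma-1+\tau]-\tilde\sigma(\tau+\theta)$, $\widetilde\varphi(\sigma)=\sigma-(1-\tau-\theta)^2-\tilde\sigma(\tau+\theta)$,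 $\overline\varphi(\sigma)=[(1+\tau)\widehat\varphi(\sigma)-2\tau\varphi(\sigma)](1+\tau)\widetilde\varphi(\sigma)-(1-\theta)^2\varphi(\sigma)^2$. *)

(* Defs.v *)
From HB Require Import structures.
From mathcomp Require Import all_boot all_order all_algebra.
From mathcomp Require Import all_classical all_reals all_analysis.
Set Implicit Arguments. Unset Strict Implicit. Unset Printing Implicit Defensive.
Import Order.TTheory GRing.Theory Num.Theory.
Import numFieldNormedType.Exports.
Local Open Scope ring_scope.
Local Open Scope classical_set_scope.

Section Defs.
Variable R : realType.

Definition dotv (k : nat) (a b : 'cV[R]_k) : R := (a^T *m b) 0 0.
Definition sqn (k : nat) (a : 'cV[R]_k) : R := dotv a a.
Definition qnorm2 (k : nat) (Q : 'M[R]_k) (v : 'cV[R]_k) : R := dotv (Q *m v) v.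

Definition posdef (k : nat) (Q : 'M[R]_k) : Prop :=
  Q^T = Q /\ forall v : 'cV[R]_k, v != 0 -> 0 < qnorm2 Q v.
Definition psd (k : nat) (Q : 'M[R]_k) : Prop :=
  Q^T = Q /\ forall v : 'cV[R]_k, 0 <= qnorm2 Q v.

(* Functions R^k -> (-oo, +oo] are modelled as maps into \bar R never equal to -oo. *)
Definition proper_fun (k : nat) (h : 'cV[R]_k -> \bar R) : Prop :=
  (forall v, h v != -oo%E) /\ exists v, h v \is a fin_num.
Definition convex_fun (k : nat) (h : 'cV[R]_k -> \bar R) : Prop :=
  forall (v w : 'cV[R]_k) (t : R), 0 < t < 1 ->
    let c := (t *: v + (1 - t) *: w)%R in (h c <= t%:E * h v + (1 - t)%:E * h w)%E.
(* closed = epigraph closed (sequentially; equivalent in finite dimension) *)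
Definition closed_fun (k : nat) (h : 'cV[R]_k -> \bar R) : Prop :=
  forall (v : nat -> 'cV[R]_k) (a : nat -> R) (v0 : 'cV[R]_k) (a0 : R),
    (forall i j, (fun l => v l i j) @ \oo --> (v0 i j : R)) ->
    a @ \oo --> (a0 : R) ->
    (forall l, (h (v l) <= (a l)%:E)%E) ->
    (h v0 <= a0%:E)%E.

Definition subdiff (k : nat) (h : 'cV[R]_k -> \bar R) (v u : 'cV[R]_k) : Prop :=
  h v \is a fin_num /\ forall w, (h v + (dotv u (w - v))%:E <= h w)%E.

(* 0 \in T(x,y,gam), i.e. (x,y,gam) solves the Lagrangian system *)
Definition lagr_sol (n p m : nat) (f : 'cV[R]_n -> \bar R) (g : 'cV[R]_p -> \bar R)
  (A : 'M[R]_(m, n)) (B : 'M[R]_(m, p)) (b : 'cV[R]_m)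
  (x : 'cV[R]_n) (y : 'cV[R]_p) (gam : 'cV[R]_m) : Prop :=
  subdiff f x (A^T *m gam) /\ subdiff g y (B^T *m gam) /\ A *m x + B *m y - b = 0.

Definition param_region (sigt tau theta : R) : Prop :=
  -1 < tau < 1 - sigt /\ 0 < tau + theta /\
  0 < (1 - tau ^+ 2) * (2 - tau - theta - sigt) - (1 - theta) ^+ 2 * (1 - tau - sigt).

Definition zvec (n p m : nat) (x : 'cV[R]_n) (y : 'cV[R]_p) (gam : 'cV[R]_m)
  : 'cV[R]_(n + p + m) := col_mx (col_mx x y) gam.

Definition Mmat (n p m : nat) (B : 'M[R]_(m, p)) (G : 'M[R]_n) (H : 'M[R]_p)
  (beta tau theta : R) : 'M[R]_(n + p + m) :=
  block_mx
    (block_mx G 0 0 (H + ((tau - tau * theta + theta) * beta / (tau + theta)) *: (B^T *m B)))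
    (col_mx (0 : 'M[R]_(n, m)) (- (tau / (tau + theta)) *: B^T))
    (row_mx (0 : 'M[R]_(m, n)) (- (tau / (tau + theta)) *: B))
    ((1 / ((tau + theta) * beta)) *: 1%:M).

Definition dist0 (n p m : nat) (f : 'cV[R]_n -> \bar R) (g : 'cV[R]_p -> \bar R)
  (A : 'M[R]_(m, n)) (B : 'M[R]_(m, p)) (b : 'cV[R]_m) (G : 'M[R]_n) (H : 'M[R]_p)
  (beta tau theta : R) (z0 : 'cV[R]_(n + p + m)) : R :=
  inf [set d | exists xs ys gs, lagr_sol f g A B b xs ys gs /\
               d = qnorm2 (Mmat B G H beta tau theta) (zvec xs ys gs - z0)].

Definition vartheta (sigt tau theta : R) : R :=
  Num.sqrt ((3 - 3 * tau - 2 * sigt) * (4 - tau - theta - 2 * sigt)) - 2 * (1 - tau - sigt).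
Definition phi (sigt tau theta s : R) : R :=
  (1 - tau) * (s - 1) + (1 - tau - sigt) * (tau + theta).
Definition phihat (sigt tau theta s : R) : R :=
  (1 - tau) * ((1 + theta) * s - 1 + tau) - sigt * (tau + theta).
Definition phitilde (sigt tau theta s : R) : R :=
  s - (1 - tau - theta) ^+ 2 - sigt * (tau + theta).
Definition phibar (sigt tau theta s : R) : R :=
  ((1 + tau) * phihat sigt tau theta s - 2 * tau * phi sigt tau theta s)
    * (1 + tau) * phitilde sigt tau theta s
  - (1 - theta) ^+ 2 * (phi sigt tau theta s) ^+ 2.

(* The iterates (indices k >= 1 for xt, u, gt, gh = gamma_{k-1/2}) are generated
   by the inexact symmetric proximal ADMM. *)
Definition isp_admm (n p m : nat) (f : 'cV[R]_n -> \bar R) (g : 'cV[R]_p -> \bar R)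
  (A : 'M[R]_(m, n)) (B : 'M[R]_(m, p)) (b : 'cV[R]_m)
  (beta sigt sigh tau theta : R) (G : 'M[R]_n) (H : 'M[R]_p)
  (x : nat -> 'cV[R]_n) (y : nat -> 'cV[R]_p) (gam : nat -> 'cV[R]_m)
  (xt : nat -> 'cV[R]_n) (u : nat -> 'cV[R]_n) (gt : nat -> 'cV[R]_m)
  (gh : nat -> 'cV[R]_m) : Prop :=
  forall k : nat, (1 <= k)%N ->
  [/\ gt k = gam k.-1 - beta *: (A *m xt k + B *m y k.-1 - b),
      subdiff f (xt k) (u k + A^T *m gt k),
      qnorm2 G (xt k - x k.-1 + invmx G *m u k)
        <= sigt / beta * sqn (gt k - gam k.-1) + sigh * qnorm2 G (xt k - x k.-1),
      gh k = gam k.-1 - (tau * beta) *: (A *m xt k + B *m y k.-1 - b) &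
   [/\ (forall yy : 'cV[R]_p,
         (g (y k) + (- dotv (gh k) (B *m y k)
                     + beta / 2 * sqn (A *m xt k + B *m y k - b)
                     + 1 / 2 * qnorm2 H (y k - y k.-1))%:E
          <= g yy + (- dotv (gh k) (B *m yy)
                     + beta / 2 * sqn (A *m xt k + B *m yy - b)
                     + 1 / 2 * qnorm2 H (yy - y k.-1))%:E)%E),
      x k = x k.-1 - invmx G *m u k
    & gam k = gh k - (theta * beta) *: (A *m xt k + B *m y k - b)]].

End Defs.

(* Main.v *)
Require Import Defs.
From HB Require Import structures.
From mathcomp Require Import all_boot all_order all_algebra.
From mathcomp Require Import all_classical all_reals all_analysis.
From mathcomp Require Import ring lra.
Import Order.TTheory GRing.Theory Num.Theory.
Local Open Scope ring_scope.
Section L.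
Context {R : realType}.
Implicit Types (k : nat).

Lemma dotvE k (a c : 'cV[R]_k) : dotv a c = \sum_i a i 0 * c i 0.
Proof. by rewrite /dotv !mxE; apply: eq_bigr => i _; rewrite !mxE. Qed.

Lemma dotvC k (a c : 'cV[R]_k) : dotv a c = dotv c a.
Proof. by rewrite !dotvE; apply: eq_bigr => i _; rewrite mulrC. Qed.

Lemma dotvDl k (a a' c : 'cV[R]_k) : dotv (a + a') c = dotv a c + dotv a' c.
Proof. by rewrite !dotvE -big_split; apply: eq_bigr => i _; rewrite !mxE mulrDl. Qed.

Lemma dotvZl k (t : R) (a c : 'cV[R]_k) : dotv (t *: a) c = t * dotv a c.
Proof. by rewrite !dotvE mulr_sumr; apply: eq_bigr => i _; rewrite !mxE mulrA. Qed.

Lemma dotvNl k (a c : 'cV[R]_k) : dotv (- a) c = - dotv a c.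
Proof. by rewrite -scaleN1r dotvZl mulN1r. Qed.

Lemma dotvBl k (a a' c : 'cV[R]_k) : dotv (a - a') c = dotv a c - dotv a' c.
Proof. by rewrite dotvDl dotvNl. Qed.

Lemma dotvDr k (a c c' : 'cV[R]_k) : dotv a (c + c') = dotv a c + dotv a c'.
Proof. by rewrite dotvC dotvDl !(dotvC _ a). Qed.
Lemma dotvZr k (t : R) (a c : 'cV[R]_k) : dotv a (t *: c) = t * dotv a c.
Proof. by rewrite dotvC dotvZl dotvC. Qed.
Lemma dotvNr k (a c : 'cV[R]_k) : dotv a (- c) = - dotv a c.
Proof. by rewrite dotvC dotvNl dotvC. Qed.
Lemma dotvBr k (a c c' : 'cV[R]_k) : dotv a (c - c') = dotv a c - dotv a c'.
Proof. by rewrite dotvDr dotvNr. Qed.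
Lemma dotv0l k (c : 'cV[R]_k) : dotv 0 c = 0.
Proof. by rewrite dotvE big1 // => i _; rewrite mxE mul0r. Qed.
Lemma dotv0r k (c : 'cV[R]_k) : dotv c 0 = 0.
Proof. by rewrite dotvC dotv0l. Qed.

Lemma dotv_mull k l (M : 'M[R]_(l, k)) (a : 'cV[R]_k) (c : 'cV[R]_l) :
  dotv (M *m a) c = dotv a (M^T *m c).
Proof. by rewrite /dotv trmx_mul mulmxA. Qed.

Lemma sqn_ge0 k (a : 'cV[R]_k) : 0 <= sqn a.
Proof. rewrite /sqn dotvE; apply: sumr_ge0 => i _; by rewrite -expr2 sqr_ge0. Qed.

Lemma dotv_col k l (a c : 'cV[R]_k) (a' c' : 'cV[R]_l) :
  dotv (col_mx a a') (col_mx c c') = dotv a c + dotv a' c'.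
Proof. by rewrite /dotv tr_col_mx mul_row_col mxE. Qed.

Lemma dotv_trl k l (M : 'M[R]_(l, k)) (v : 'cV[R]_l) (d : 'cV[R]_k) :
  dotv (M^T *m v) d = dotv v (M *m d).
Proof. by rewrite dotv_mull trmxK. Qed.

Lemma qnormM n p m (B : 'M[R]_(m, p)) (G : 'M[R]_n) (H : 'M[R]_p) beta tau theta a d c :
  qnorm2 (Mmat B G H beta tau theta) (zvec a d c) =
  qnorm2 G a + qnorm2 H d
  + ((tau - tau * theta + theta) * beta / (tau + theta)) * sqn (B *m d)
  - 2 * (tau / (tau + theta)) * dotv (B *m d) c
  + (1 / ((tau + theta) * beta)) * sqn c.
Proof.
rewrite /qnorm2 /Mmat /zvec mul_block_col mul_block_col mul_col_mx mul_row_col.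
rewrite !mul0mx !addr0 !add0r add_col_mx !dotv_col addr0.
rewrite mulmxDl dotvDl -!scalemxAl !dotvDl !dotvZl mul1mx -mulmxA !dotv_trl.
rewrite /sqn (dotvC _ c (B *m d)).
ring.
Qed.

Lemma zvecB n p m (a a' : 'cV[R]_n) (d d' : 'cV[R]_p) (c c' : 'cV[R]_m) :
  zvec a d c - zvec a' d' c' = zvec (a - a') (d - d') (c - c').
Proof. by rewrite /zvec opp_col_mx add_col_mx opp_col_mx add_col_mx. Qed.
Lemma subdiff_mono k (h : 'cV[R]_k -> \bar R) v1 v2 u1 u2 :
  subdiff h v1 u1 -> subdiff h v2 u2 -> 0 <= dotv (u1 - u2) (v1 - v2).
Proof.
move=> [f1 H1] [f2 H2].
have := H1 v2; have := H2 v1.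
rewrite -(fineK f1) -(fineK f2) -!EFinD !lee_fin => h1 h2.
rewrite dotvBl.
have e1 : dotv u1 (v2 - v1) = - dotv u1 (v1 - v2).
  by rewrite -dotvNr opprB.
rewrite e1 in h2. lra.
Qed.

Lemma le_of_small (a b c : R) : 0 <= c ->
  (forall t, 0 < t -> t < 1 -> a <= b + t * c) -> a <= b.
Proof.
move=> c0 H; apply/ler_addgt0Pr => e e0.
have d0 : 0 < e + c + 1 by lra.
pose t := e / (e + c + 1).
have t0 : 0 < t by rewrite /t divr_gt0.
have t1 : t < 1 by rewrite /t ltr_pdivrMr // mul1r; lra.
have tc : t * c <= e.
  rewrite /t mulrAC ler_pdivrMr //.
  by rewrite mulrDr mulrDr mulr1; nra.
have := H t t0 t1; lra.
Qed.
Lemma sqn_lin k (r d : 'cV[R]_k) t :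
  sqn (r + t *: d) = sqn r + 2 * t * dotv r d + t ^+ 2 * sqn d.
Proof.
rewrite /sqn !dotvDl !dotvDr !dotvZl !dotvZr (dotvC _ d r); ring.
Qed.

Lemma qn_lin k (H : 'M[R]_k) (r d : 'cV[R]_k) t : H^T = H ->
  qnorm2 H (r + t *: d) = qnorm2 H r + 2 * t * dotv (H *m r) d + t ^+ 2 * qnorm2 H d.
Proof.
move=> HT.
rewrite /qnorm2 mulmxDr -scalemxAr !dotvDl !dotvDr !dotvZl !dotvZr.
have -> : dotv (H *m d) r = dotv (H *m r) d by rewrite dotv_mull HT dotvC.
ring.
Qed.

Lemma argmin_subdiff p m (g : 'cV[R]_p -> \bar R) (B : 'M[R]_(m,p)) (H : 'M[R]_p)
  (c a bb : 'cV[R]_m) (beta : R) (yk y' : 'cV[R]_p) :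
  proper_fun g -> convex_fun g -> psd H -> 0 <= beta ->
  (forall yy, (g yk + (- dotv c (B *m yk) + beta / 2 * sqn (a + B *m yk - bb)
                       + 1 / 2 * qnorm2 H (yk - y'))%:E
       <= g yy + (- dotv c (B *m yy) + beta / 2 * sqn (a + B *m yy - bb)
                       + 1 / 2 * qnorm2 H (yy - y'))%:E)%E) ->
  subdiff g yk (B^T *m (c - beta *: (a + B *m yk - bb)) - H *m (yk - y')).
Proof.
move=> [gninf [v0 fv0]] gconv [HT Hpsd] b0 Hmin.
have fk : g yk \is a fin_num.
  rewrite fin_numE gninf /=; apply/negP => /eqP gE.
  have := Hmin v0; rewrite gE -(fineK fv0) -EFinD.
  by [].
split=> // w.
case Ew: (g w) => [r1| |]; last by have := gninf w; rewrite Ew.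
  2: by rewrite leey.
set d := w - yk.
set r := a + B *m yk - bb.
set e0 := yk - y'.
set Qd := beta / 2 * sqn (B *m d) + 1 / 2 * qnorm2 H d.
have Qd0 : 0 <= Qd.
  apply: addr_ge0; apply: mulr_ge0; rewrite ?sqn_ge0 ?Hpsd //; lra.
rewrite -(fineK fk) -EFinD lee_fin.
set r0 := fine (g yk).

apply: (le_of_small _ _ _ Qd0) => t t0 t1.
pose yt := t *: w + (1 - t) *: yk.
have eyt : yt = yk + t *: d.
  by apply/matrixP => i j; rewrite /yt /d !mxE; ring.
have conv := gconv w yk t.
rewrite t0 t1 /= -/yt Ew -(fineK fk) -!EFinM -EFinD in conv.
have hm := Hmin yt.
have hm2 := le_trans hm (leeD2r _ (conv isT)).
rewrite -(fineK fk) -/r0 -!EFinD lee_fin in hm2.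
move: hm2.
rewrite eyt mulmxDr -scalemxAr.
have -> : a + (B *m yk + t *: (B *m d)) - bb = r + t *: (B *m d).
  by apply/matrixP => i j; rewrite /r !mxE; ring.
have -> : yk + t *: d - y' = e0 + t *: d.
  by apply/matrixP => i j; rewrite /e0 !mxE; ring.
rewrite sqn_lin qn_lin // dotvDr dotvZr.
have ev : dotv (B^T *m (c - beta *: r) - H *m e0) d
   = dotv c (B *m d) - beta * dotv r (B *m d) - dotv (H *m e0) d.
  by rewrite dotvBl dotv_trl dotvBl dotvZl.
rewrite ev -/r -/e0 /= /Qd => hm2.
have : t * (r0 + (dotv c (B *m d) - beta * dotv r (B *m d) - dotv (H *m e0) d)
         - (r1 + t * (beta / 2 * sqn (B *m d) + 1 / 2 * qnorm2 H d))) <= 0.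
  match type of hm2 with is_true (?L <= ?Rr) =>
    have hZ : 0 <= Rr - L by rewrite subr_ge0 end.
  match goal with |- is_true (?L <= 0) => 
    match type of hZ with is_true (0 <= ?Z) =>
      have -> : L = - Z by field end end.
  by rewrite oppr_le0.
rewrite pmulr_rle0 //; lra.
Qed.
Lemma posdef_unit k (G : 'M[R]_k) : posdef G -> G \in unitmx.
Proof.
move=> [GT Gp]; rewrite unitmxE unitfE; apply/negP => /det0P [v nv vG].
have nvT : v^T != 0 by apply: contra nv => /eqP h; rewrite -[v]trmxK h trmx0.
have := Gp _ nvT; rewrite /qnorm2.
have -> : G *m v^T = 0 by rewrite -{1}GT -trmx_mul vG trmx0.
by rewrite dotv0l ltxx.
Qed.

Lemma posdef_psd k (G : 'M[R]_k) v : posdef G -> 0 <= qnorm2 G v.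
Proof.
move=> [_ Gp]; have [->|nv] := eqVneq v 0; last exact/ltW/Gp.
by rewrite /qnorm2 mulmx0 dotv0l.
Qed.

Lemma three_point k (G : 'M[R]_k) (X0 X1 pp : 'cV[R]_k) : G^T = G ->
  2 * dotv (G *m (X0 - X1)) pp =
  qnorm2 G (pp - X1) - qnorm2 G (pp - X0) + qnorm2 G X0 - qnorm2 G X1.
Proof.
move=> GT.
have sym : forall a c : 'cV[R]_k, dotv (G *m a) c = dotv (G *m c) a.
  by move=> a c; rewrite dotv_mull GT dotvC.
rewrite /qnorm2 !mulmxBr !dotvBl !dotvBr (sym X1 pp) (sym X0 pp).
ring.
Qed.

Lemma cs_psd k (H : 'M[R]_k) (a c : 'cV[R]_k) : psd H ->
  2 * dotv (H *m a) c <= qnorm2 H a + qnorm2 H c.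
Proof.
move=> [HT Hp]; have := Hp (a - c).
have sym : dotv (H *m c) a = dotv (H *m a) c by rewrite dotv_mull HT dotvC.
rewrite /qnorm2 mulmxBr !dotvBl !dotvBr sym. lra.
Qed.
End L.
Arguments argmin_subdiff {R p m g B H c a bb beta yk y'}.
Arguments subdiff_mono {R k h v1 v2 u1 u2}.
Local Open Scope ring_scope.
Section C.
Context {R : realType}.

Lemma core2 (beta sigt sigh tau theta sigma Gex Gax Qq Qw Qqw Qp Qpw s s' hd : R) :
  0 < beta -> 0 <= sigh -> sigh <= sigma -> -1 < tau -> 0 < tau + theta ->
  0 <= phi sigt tau theta sigma -> 0 <= phihat sigt tau theta sigma ->
  0 < phitilde sigt tau theta sigma -> 0 <= phibar sigt tau theta sigma ->
  0 <= Gax -> 0 <= s ->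
  Gex <= sigt / beta * (Qq + 2 * Qqw + Qw) + sigh * Gax ->
  0 <= ((1 + tau) * Qqw + tau * Qw - (1 - theta) * Qpw) / beta - s + hd ->
  2 * hd <= s + s' ->
  (forall a c : R, 0 <= a ^+ 2 * Qp + 2 * a * c * Qpw + c ^+ 2 * Qw) ->
  Gex + 1 / ((tau + theta) * beta) * ((1 - (tau + theta)) ^+ 2 * Qq
        + 2 * (1 - (tau + theta)) * (1 - tau) * Qqw + (1 - tau) ^+ 2 * Qw)
  + (phitilde sigt tau theta sigma / ((tau + theta) * beta) * Qq
     + phi sigt tau theta sigma / ((tau + theta) * (1 + tau)) * s)
  <= sigma * (Gax + s + ((tau - tau * theta + theta) * beta / (tau + theta)) * (Qw / beta ^+ 2)
       - 2 * (tau / (tau + theta)) * ((Qqw + Qw) / beta)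
       + 1 / ((tau + theta) * beta) * (Qq + 2 * Qqw + Qw))
  + (phitilde sigt tau theta sigma / ((tau + theta) * beta) * Qp
     + phi sigt tau theta sigma / ((tau + theta) * (1 + tau)) * s').
Proof.
move=> b0 sh0 shs t1 T0 hphi hphh hpht hphb Gax0 s0 hE hX hhd hCS.
set ph := phi sigt tau theta sigma.
set pht := phitilde sigt tau theta sigma.
set phh := phihat sigt tau theta sigma.
set phb := phibar sigt tau theta sigma.
set T := tau + theta.
set om := 1 + tau.
have om0 : 0 < om by rewrite /om; lra.
set lam := 2 * ph / om.
set Esl := sigt / beta * (Qq + 2 * Qqw + Qw) + sigh * Gax - Gex.
set Xm := ((1 + tau) * Qqw + tau * Qw - (1 - theta) * Qpw) / beta - s + hd.
set CS := pht ^+ 2 * Qp + 2 * pht * (lam * (1 - theta) / 2) * Qpw + (lam * (1 - theta) / 2) ^+ 2 * Qw.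
set D := T * beta * Esl + T * beta * (sigma - sigh) * Gax + sigma * T * beta * s
   + lam * (beta * Xm + beta / 2 * (s + s' - 2 * hd)) + CS / pht + phb / (om ^+ 2 * pht) * Qw.
rewrite -subr_ge0.
have pht0 : pht != 0 by rewrite gt_eqF.
have T0' : T != 0 by rewrite gt_eqF.
have b0' : beta != 0 by rewrite gt_eqF.
have om0' : om != 0 by rewrite gt_eqF.
match goal with |- is_true (0 <= ?E) => have -> : E = D / (T * beta) end.
  move: pht0; rewrite /D /CS /Esl /Xm /lam /phb /phh /pht /ph /phibar /phihat /phitilde /phi => pht0.
  rewrite /T /om in T0' om0' pht0 *.
  by field; rewrite b0' T0' pht0 om0'.
apply: divr_ge0; last by apply: mulr_ge0; apply: ltW.
have Esl0 : 0 <= Esl by rewrite /Esl subr_ge0.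
have CS0 : 0 <= CS by apply: hCS.
have lam0 : 0 <= lam by rewrite /lam divr_ge0 // ?mulr_ge0 // ltW.
have Qw0 : 0 <= Qw.
  have h := hCS 0 1.
  have e : 0 ^+ 2 * Qp + 2 * 0 * 1 * Qpw + 1 ^+ 2 * Qw = Qw by ring.
  by rewrite -e.
have hd' : 0 <= s + s' - 2 * hd by lra.
have shs' : 0 <= sigma - sigh by lra.
have Tp := T0.
have Xm0 : 0 <= Xm by [].
have Tq : 0 < T by [].
have ph1 : 0 < pht by [].
have ph2 : 0 <= phb by [].
rewrite /D.
set ds := sigma - sigh. set hdd := s + s' - 2 * hd.
have ds0 : 0 <= ds by []. have hdd0 : 0 <= hdd by [].
clearbody Esl Xm CS lam phb pht T om ds hdd.
repeat (first [ apply: addr_ge0 | apply: mulr_ge0 | rewrite invr_ge0 | apply: exprn_ge0 ]);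
  try (by apply: ltW); try done; try lra.
Qed.
Lemma core1a (beta sigt sigh tau theta kap
   dGp gX0 gX1 gpX1 gpX0 s hY hYd Qq Qw Qqw QG Qb QGq QGw QGb Qbq Qbw : R) :
  0 < beta -> 0 <= sigh -> sigh < 1 -> tau < 1 -> 0 < tau + theta -> 1 <= kap ->
  0 < 4 - (tau + theta) - 2 * sigt ->
  0 <= kap ^+ 2 * ((4 - (tau + theta) - 2 * sigt) * (3 - 3 * tau - 2 * sigt))
       - (2 * kap * (1 - tau - sigt) + (1 + tau)) ^+ 2 ->
  0 <= dGp - (QGq + QGw + QGb + Qq + 2 * Qqw + Qbq + Qw + Qbw) / beta ->
  0 <= (QGw + QGb + (1 + tau) * (Qqw + Qbq) + tau * (Qw + Qbw)) / beta - s - hYd ->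
  2 * dGp = gpX1 - gpX0 + gX0 - gX1 ->
  gpX1 <= sigt / beta * (Qq + 2 * Qqw + Qw) + sigh * gpX0 ->
  0 <= gX0 -> 0 <= gX1 -> 0 <= gpX0 -> 0 <= s ->
  0 <= hY + hYd + s / 4 ->
  0 <= QG + tau ^+ 2 * Qb + (tau + theta) ^+ 2 / 4 * Qq - 2 * tau * QGb
        + (tau + theta) * QGq - tau * (tau + theta) * Qbq ->
  0 <= Qb + Qbw + Qw / 4 ->
  (forall a c : R, 0 <= a ^+ 2 * Qq + 2 * a * c * Qqw + c ^+ 2 * Qw) ->
  beta * s - 2 * (1 + tau) * Qqw <=
  4 * kap * beta * (gX0 + hY + ((tau - tau * theta + theta) * beta / (tau + theta)) * (Qb / beta ^+ 2)
      - 2 * (tau / (tau + theta)) * (QGb / beta) + 1 / ((tau + theta) * beta) * QG).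
Proof.
move=> b0 sh0 sh1 t1 T0 k1 u0 Dl hF hG h3 hE gX00 gX10 gpX00 s0 hSy hSG hSb hCS.
set u := 4 - (tau + theta) - 2 * sigt.
set v3 := 3 - 3 * tau - 2 * sigt.
set a0 := 1 - tau - sigt.
set om := 1 + tau.
set T := tau + theta.
set Dl' := kap ^+ 2 * (u * v3) - (2 * kap * a0 + om) ^+ 2.
set Fp := dGp - (QGq + QGw + QGb + Qq + 2 * Qqw + Qbq + Qw + Qbw) / beta.
set Gp := (QGw + QGb + om * (Qqw + Qbq) + tau * (Qw + Qbw)) / beta - s - hYd.
set Esl := sigt / beta * (Qq + 2 * Qqw + Qw) + sigh * gpX0 - gpX1.
set Sy := hY + hYd + s / 4.
set SG := QG + tau ^+ 2 * Qb + T ^+ 2 / 4 * Qq - 2 * tau * QGb + T * QGq - tau * T * Qbq.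
set Sb := Qb + Qbw + Qw / 4.
set CSv := (kap * u) ^+ 2 * Qq + 2 * (kap * u) * (2 * kap * a0 + om) * Qqw
           + (2 * kap * a0 + om) ^+ 2 * Qw.
have Esl0 : 0 <= Esl by rewrite /Esl subr_ge0.
have CS0 : 0 <= CSv by apply: hCS.
have Qw0 : 0 <= Qw.
  have h := hCS 0 1.
  have e : 0 ^+ 2 * Qq + 2 * 0 * 1 * Qqw + 1 ^+ 2 * Qw = Qw by ring.
  by rewrite -e.
have dG : dGp = (gpX1 - gpX0 + gX0 - gX1) / 2 by rewrite -h3; field.
set Z := 2 * kap * (2 * beta * Fp + 2 * beta * Gp + beta * Esl + beta * (1 - sigh) * gpX0 + beta * gX1)
  + 2 * kap * beta * gX0 + (3 * kap - 1) * beta * s + 4 * kap * beta * Sy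
  + 4 * kap / T * SG + 4 * kap * (1 - tau) * Sb + (CSv + Dl' * Qw) / (kap * u).
rewrite -subr_ge0.
have T0' : T != 0 by rewrite gt_eqF.
have b0' : beta != 0 by rewrite gt_eqF.
have k0 : kap != 0 by rewrite gt_eqF //; lra.
have u0' : u != 0 by rewrite gt_eqF.
match goal with |- is_true (0 <= ?E) => have -> : E = Z end.
  rewrite /Z /CSv /Dl' /Sb /SG /Sy /Esl /Gp /Fp dG /u /v3 /a0 /om /T.
  rewrite /T in T0'. rewrite /u in u0'.
  by field; rewrite b0' T0' k0 u0'.
have Fp0 : 0 <= Fp by [].
have Gp0 : 0 <= Gp by [].
have Sy0 : 0 <= Sy by [].
have SG0 : 0 <= SG by [].
have Sb0 : 0 <= Sb by [].
have Dl0 : 0 <= Dl' by [].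
have Tq : 0 < T by [].
have uq : 0 < u by [].
have k3 : 0 <= 3 * kap - 1 by lra.
have t1' : 0 <= 1 - tau by lra.
have sh1' : 0 <= 1 - sigh by lra.
have kp : 0 < kap by lra.
rewrite /Z.
set k3' := 3 * kap - 1.
have k30 : 0 <= k3' by [].
clearbody Fp Gp Sy SG Sb Dl' Esl CSv T u k3' .
move: t1' sh1'; set t1'' := 1 - tau; set sh1'' := 1 - sigh => t1' sh1'.
clearbody t1'' sh1''.
repeat (first [ apply: addr_ge0 | apply: mulr_ge0 | rewrite invr_ge0 | apply: exprn_ge0 ]);
  try (by apply: ltW); try done; try lra.
Qed.

Lemma params (sigt tau theta : R) : 0 <= sigt < 1 -> param_region sigt tau theta ->
  [/\ 0 < vartheta sigt tau theta, 1 <= (1 + tau + vartheta sigt tau theta) / vartheta sigt tau theta,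
      0 < 4 - (tau + theta) - 2 * sigt, tau < 1 &
      0 <= ((1 + tau + vartheta sigt tau theta) / vartheta sigt tau theta) ^+ 2
           * ((4 - (tau + theta) - 2 * sigt) * (3 - 3 * tau - 2 * sigt))
       - (2 * ((1 + tau + vartheta sigt tau theta) / vartheta sigt tau theta) * (1 - tau - sigt)
          + (1 + tau)) ^+ 2].
Proof.
move=> /andP [st0 st1] [/andP [tm tp] [T0 rg]].
have a0 : 0 < 1 - tau - sigt by lra.
have om : 0 < 1 + tau by lra.
have h2 : 0 < 2 - (tau + theta) - sigt.
  rewrite ltNge; apply/negP => hle.
  have : (1 - tau ^+ 2) * (2 - tau - theta - sigt) <= 0.
    rewrite pmulr_rle0; first by lra.
    rewrite subr_gt0 expr2; nra.
  have : 0 <= (1 - theta) ^+ 2 * (1 - tau - sigt) by rewrite mulr_ge0 ?sqr_ge0 // ltW.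
  lra.
set u := 4 - (tau + theta) - 2 * sigt.
set v3 := 3 - 3 * tau - 2 * sigt.
have u0 : 0 < u by rewrite /u; lra.
have v30 : 0 < v3 by rewrite /v3; lra.
have P0 : 4 * (1 - tau - sigt) ^+ 2 < v3 * u.
  have eP : v3 * u - 4 * (1 - tau - sigt) ^+ 2
     = 2 * (1 - tau - sigt) * (2 + tau - theta) + (1 - tau) * u.
    by rewrite /v3 /u; ring.
  rewrite -subr_gt0 eP.
  have t1 : 0 < 1 - tau by lra.
  have hu : 0 < (1 - tau) * u by apply: mulr_gt0.
  case: (lerP 0 (2 + tau - theta)) => hc.
    by apply: ltr_wpDl => //; apply: mulr_ge0 => //; lra.
  set D := theta - 1.
  have Dp : 1 + tau < D by rewrite /D; lra.
  have Dpos : 0 < D by lra.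
  set W := (1 - tau) * (2 - (tau + theta) - sigt).
  have W0 : 0 < W by apply: mulr_gt0.
  have rg' : (1 - tau - sigt) * D ^+ 2 < (1 + tau) * W.
    move: rg; rewrite /W /D.
    have -> : (1 - tau ^+ 2) * (2 - tau - theta - sigt) = (1 + tau) * ((1 - tau) * (2 - (tau + theta) - sigt)).
      by rewrite expr2; ring.
    have -> : (1 - theta) ^+ 2 = (theta - 1) ^+ 2 by rewrite !expr2; ring.
    lra.
  have h1 : (1 + tau) * W < D * W by rewrite ltr_pM2r.
  have h3 : (1 - tau - sigt) * D < W.
    rewrite -(ltr_pM2r Dpos) [W * D]mulrC.
    have -> : (1 - tau - sigt) * D * D = (1 - tau - sigt) * D ^+ 2 by rewrite expr2 mulrA.
    lra.
  have h4 : 2 * W <= (1 - tau) * u.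
    rewrite -subr_ge0.
    have -> : (1 - tau) * u - 2 * W = (1 - tau) * (tau + theta) by rewrite /W /u; ring.
    apply: mulr_ge0; lra.
  have : 2 * (1 - tau - sigt) * (2 + tau - theta) = - 2 * ((1 - tau - sigt) * D) + 2 * (1 - tau - sigt) * (1 + tau).
    by rewrite /D; ring.
  have : 0 < (1 - tau - sigt) * (1 + tau) by apply: mulr_gt0.
  lra.
have vt0 : 0 < vartheta sigt tau theta.
  rewrite /vartheta subr_gt0.
  have -> : 4 - tau - theta - 2 * sigt = u by rewrite /u; ring.
  have -> : 2 * (1 - tau - sigt) = Num.sqrt ((2 * (1 - tau - sigt)) ^+ 2).
    by rewrite sqrtr_sqr ger0_norm //; lra.
  rewrite ltr_sqrt; last by rewrite mulr_gt0.
  rewrite exprMn. have -> : (2:R) ^+ 2 = 4 by rewrite expr2; lra.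
  by [].
set vt := vartheta sigt tau theta.
have vt1 : 0 < vt by [].
have evt : (vt + 2 * (1 - tau - sigt)) ^+ 2 = v3 * u.
  rewrite /vt /vartheta.
  have -> : 4 - tau - theta - 2 * sigt = u by rewrite /u; ring.
  by rewrite subrK sqr_sqrtr // mulr_ge0 // ltW.
split => //.
- by rewrite ler_pdivlMr // mul1r; lra.
- lra.
have -> : ((1 + tau + vt) / vt) ^+ 2 * (u * v3) - (2 * ((1 + tau + vt) / vt) * (1 - tau - sigt) + (1 + tau)) ^+ 2
   = (vt + (1 + tau)) * (vt + 4 * (1 - tau - sigt)) + (1 + tau) * vt.
  rewrite [u * v3]mulrC -evt.
  by field; rewrite gt_eqF.
apply: addr_ge0; apply: mulr_ge0; lra.
Qed.
Lemma core1b (beta sigt sigh tau theta sigma vt Gex Gax Qq Qw Qqw s d0 : R) :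
  0 < beta -> 0 <= sigh -> sigh <= sigma -> -1 < tau -> 0 < tau + theta -> 0 < vt ->
  0 <= phi sigt tau theta sigma -> 0 <= phihat sigt tau theta sigma ->
  0 <= Gax -> 0 <= s -> 0 <= Qw ->
  Gex <= sigt / beta * (Qq + 2 * Qqw + Qw) + sigh * Gax ->
  beta * s - 2 * (1 + tau) * Qqw <= 4 * ((1 + tau + vt) / vt) * beta * d0 ->
  Gex + 1 / ((tau + theta) * beta) * ((1 - (tau + theta)) ^+ 2 * Qq
        + 2 * (1 - (tau + theta)) * (1 - tau) * Qqw + (1 - tau) ^+ 2 * Qw)
  + (phitilde sigt tau theta sigma / ((tau + theta) * beta) * Qq
     + phi sigt tau theta sigma / ((tau + theta) * (1 + tau)) * s)
  <= sigma * (Gax + s + ((tau - tau * theta + theta) * beta / (tau + theta)) * (Qw / beta ^+ 2)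
       - 2 * (tau / (tau + theta)) * ((Qqw + Qw) / beta)
       + 1 / ((tau + theta) * beta) * (Qq + 2 * Qqw + Qw))
  + 4 * (1 + tau + vt) * phi sigt tau theta sigma / ((tau + theta) * (1 + tau) * vt) * d0.
Proof.
move=> b0 sh0 shs t1 T0 vt0 hphi hphh Gax0 s0 Qw0 hE hd.
set ph := phi sigt tau theta sigma.
set phh := phihat sigt tau theta sigma.
set T := tau + theta.
set om := 1 + tau.
have om0 : 0 < om by rewrite /om; lra.
set Esl := sigt / beta * (Qq + 2 * Qqw + Qw) + sigh * Gax - Gex.
set W := 4 * ((1 + tau + vt) / vt) * beta * d0 - (beta * s - 2 * (1 + tau) * Qqw).
have W0 : 0 <= W by rewrite /W subr_ge0.
set D := T * beta * Esl + T * beta * (sigma - sigh) * Gax + sigma * T * beta * s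
   + phh * Qw + ph / om * W.
rewrite -subr_ge0.
have T0' : T != 0 by rewrite gt_eqF.
have b0' : beta != 0 by rewrite gt_eqF.
have om0' : om != 0 by rewrite gt_eqF.
have vt0' : vt != 0 by rewrite gt_eqF.
match goal with |- is_true (0 <= ?E) => have -> : E = D / (T * beta) end.
  rewrite /D /W /Esl /phh /ph /phitilde /phihat /phi.
  rewrite /T /om in T0' om0' *.
  by field; rewrite b0' T0' om0' vt0'.
have Esl0 : 0 <= Esl by rewrite /Esl subr_ge0.
have Tq : 0 < T by [].
have ds0 : 0 <= sigma - sigh by lra.
have hph' : 0 <= ph by []. have hphh' : 0 <= phh by [].
rewrite /D.
move: ds0; set ds := sigma - sigh => ds0.
clearbody Esl W T om ds phh ph.
repeat (first [ apply: addr_ge0 | apply: mulr_ge0 | rewrite invr_ge0 | apply: exprn_ge0 ]);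
  try (by apply: ltW); try done; try lra.
Qed.
End C.
Section V.
Context {R : realType}.
Variable m : nat.
Implicit Types (b : 'cV[R]_m).

Lemma vid_gt (g0 P Q0 Q1 b : 'cV[R]_m) beta :
  (g0 - beta *: (P + Q0 - b)) - g0 = (- beta) *: (P + Q1 - b) + beta *: (Q1 - Q0).
Proof. by apply/matrixP => i j; rewrite !mxE; ring. Qed.

Lemma vid_gts (g0 gs P Q0 Q1 b : 'cV[R]_m) beta :
  (g0 - beta *: (P + Q0 - b)) - gs = (g0 - gs) + ((- beta) *: (P + Q1 - b) + beta *: (Q1 - Q0)).
Proof. by apply/matrixP => i j; rewrite !mxE; ring. Qed.

Lemma vid_gg (g0 P Q0 Q1 b : 'cV[R]_m) beta tau theta :
  (g0 - beta *: (P + Q0 - b)) - ((g0 - (tau * beta) *: (P + Q0 - b)) - (theta * beta) *: (P + Q1 - b))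
  = (1 - (tau + theta)) *: ((- beta) *: (P + Q1 - b)) + (1 - tau) *: (beta *: (Q1 - Q0)).
Proof. by apply/matrixP => i j; rewrite !mxE; ring. Qed.

Lemma vid_mono (gh' P P' Q0 Q1 b : 'cV[R]_m) beta tau theta :
  ((gh' - (theta * beta) *: (P' + Q0 - b)) - (tau * beta) *: (P + Q0 - b) + (- beta) *: (P + Q1 - b))
   - (gh' + (- beta) *: (P' + Q0 - b))
  = (1 + tau) *: ((- beta) *: (P + Q1 - b)) + tau *: (beta *: (Q1 - Q0))
    - (1 - theta) *: ((- beta) *: (P' + Q0 - b)).
Proof. by apply/matrixP => i j; rewrite !mxE; ring. Qed.

Lemma vid_gh (g0 gs P Q0 Q1 b : 'cV[R]_m) beta tau :
  (g0 - (tau * beta) *: (P + Q0 - b)) + (- beta) *: (P + Q1 - b) - gs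
  = (g0 - gs) + (1 + tau) *: ((- beta) *: (P + Q1 - b)) + tau *: (beta *: (Q1 - Q0)).
Proof. by apply/matrixP => i j; rewrite !mxE; ring. Qed.

Lemma vid_Ax (P Pxs Q0 Q1 Qs b : 'cV[R]_m) beta : beta != 0 -> Pxs + Qs - b = 0 ->
  P - Pxs = - (beta^-1 *: ((- beta) *: (P + Q1 - b) + beta *: (Q1 - Q0) + beta *: (Q0 - Qs))).
Proof.
move=> b0 /matrixP h; apply/matrixP => i j; move: (h i j); rewrite !mxE => hij.
have -> : Pxs i j = b i j - Qs i j by lra.
by field.
Qed.

Lemma vid_By (Q0 Q1 Qs : 'cV[R]_m) beta : beta != 0 ->
  Q1 - Qs = beta^-1 *: (beta *: (Q1 - Q0) + beta *: (Q0 - Qs)).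
Proof. by move=> b0; apply/matrixP => i j; rewrite !mxE; field. Qed.

Lemma vid_Bs (Q0 Qs : 'cV[R]_m) beta : beta != 0 -> Qs - Q0 = - (beta^-1 *: (beta *: (Q0 - Qs))).
Proof. by move=> b0; apply/matrixP => i j; rewrite !mxE; field. Qed.

Lemma vid_Bd (Q0 Q1 : 'cV[R]_m) beta : beta != 0 -> Q1 - Q0 = beta^-1 *: (beta *: (Q1 - Q0)).
Proof. by move=> b0; apply/matrixP => i j; rewrite !mxE; field. Qed.
End V.

Lemma qnorm2N {R : realType} k (G : 'M[R]_k) v : qnorm2 G (- v) = qnorm2 G v.
Proof. by rewrite /qnorm2 mulmxN dotvNl dotvNr opprK. Qed.
Lemma sqnN {R : realType} k (v : 'cV[R]_k) : sqn (- v) = sqn v.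
Proof. by rewrite /sqn dotvNl dotvNr opprK. Qed.
Lemma qnorm20 {R : realType} k (G : 'M[R]_k) : qnorm2 G 0 = 0.
Proof. by rewrite /qnorm2 mulmx0 dotv0l. Qed.
Lemma sqn0 {R : realType} k : sqn (0 : 'cV[R]_k) = 0.
Proof. by rewrite /sqn dotv0l. Qed.
Lemma sqn_comb {R : realType} k (a c : R) (x y : 'cV[R]_k) :
  sqn (a *: x + c *: y) = a ^+ 2 * sqn x + 2 * a * c * dotv x y + c ^+ 2 * sqn y.
Proof. rewrite /sqn !dotvDl !dotvDr !dotvZl !dotvZr (dotvC _ y x); ring. Qed.
Lemma sqn_add {R : realType} k (x y : 'cV[R]_k) :
  sqn (x + y) = sqn x + 2 * dotv x y + sqn y.
Proof. rewrite /sqn !dotvDl !dotvDr (dotvC _ y x); ring. Qed.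
Lemma sqn_scale {R : realType} k (a : R) (x : 'cV[R]_k) : sqn (a *: x) = a ^+ 2 * sqn x.
Proof. rewrite /sqn dotvZl dotvZr; ring. Qed.
Lemma lin4 {R : realType} k (X Y X' Y' : 'cV[R]_k) : (X - Y) - (X' - Y') = (X - X') - (Y - Y').
Proof. by apply/matrixP => i j; rewrite !mxE; ring. Qed.
Lemma mono_expand {R : realType} k (qa qb wv : 'cV[R]_k) (tau theta beta : R) :
  dotv ((1 + tau) *: qa + tau *: wv - (1 - theta) *: qb) (beta^-1 *: wv)
  = beta^-1 * ((1 + tau) * dotv qa wv + tau * sqn wv - (1 - theta) * dotv qb wv).
Proof. rewrite /sqn !dotvBl !dotvDl !dotvZl !dotvZr; ring. Qed.
Section E.
Context {R : realType}.
Variable m : nat.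
Implicit Types (Gm q w bb : 'cV[R]_m).
Lemma F_expand Gm q w bb (beta : R) :
  dotv (Gm + (q + w)) (- (beta^-1 *: (q + w + bb))) =
  - (dotv Gm q + dotv Gm w + dotv Gm bb + sqn q + 2 * dotv q w + dotv q bb + sqn w + dotv w bb) / beta.
Proof. rewrite /sqn dotvNr !dotvDl !dotvZr !dotvDr (dotvC _ w q); ring. Qed.
Lemma G_expand Gm q w bb (beta tau : R) :
  dotv (Gm + (1 + tau) *: q + tau *: w) (beta^-1 *: (w + bb)) =
  (dotv Gm w + dotv Gm bb + (1 + tau) * (dotv q w + dotv q bb) + tau * (sqn w + dotv w bb)) / beta.
Proof. rewrite /sqn !dotvDl !dotvZl !dotvZr !dotvDr; ring. Qed.
Lemma SG_expand Gm q bb (tau T : R) :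
  sqn (Gm + (- tau) *: bb + (T / 2) *: q) =
  sqn Gm + tau ^+ 2 * sqn bb + T ^+ 2 / 4 * sqn q - 2 * tau * dotv Gm bb
        + T * dotv Gm q - tau * T * dotv q bb.
Proof.
rewrite /sqn !dotvDl !dotvZl !dotvDr !dotvZr (dotvC _ bb Gm) (dotvC _ q Gm) (dotvC _ bb q).
by field.
Qed.
Lemma Sb_expand w bb : sqn (bb + (1 / 2) *: w) = sqn bb + dotv w bb + sqn w / 4.
Proof. rewrite /sqn !dotvDl !dotvZl !dotvDr !dotvZr (dotvC _ bb w). by field. Qed.
Lemma ds_expand Gm bb (beta : R) :
  dotv (- (beta^-1 *: bb)) (- Gm) = dotv Gm bb / beta.
Proof. by rewrite dotvNl dotvNr opprK dotvZl dotvC mulrC. Qed.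
Lemma sqnNs bb (beta : R) : sqn (- (beta^-1 *: bb)) = sqn bb / beta ^+ 2.
Proof. by rewrite sqnN sqn_scale exprVn mulrC. Qed.
End E.
Lemma lin3 {R : realType} k (X Y Z : 'cV[R]_k) : (X - Y) - Z = (X - Z) - Y.
Proof. by apply/matrixP => i j; rewrite !mxE; ring. Qed.
Lemma lin_pp {R : realType} k (a c e : 'cV[R]_k) : (a - e) - (c - e) = a - c.
Proof. by apply/matrixP => i j; rewrite !mxE; ring. Qed.
Lemma lin_ys {R : realType} k (y1 y0 ys : 'cV[R]_k) : y1 - ys = (y1 - y0) + (y0 - ys).
Proof. by apply/matrixP => i j; rewrite !mxE; ring. Qed.
Lemma lin_neg {R : realType} k (a c : 'cV[R]_k) : c - a = - (a - c).
Proof. by rewrite opprB. Qed.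
Section VB.
Context {R : realType}.
Variables (n p m : nat) (A : 'M[R]_(m, n)) (B : 'M[R]_(m, p)).
Lemma vB1 (y1 y0 ys : 'cV[R]_p) (beta : R) : beta != 0 ->
  B *m (y1 - ys) = beta^-1 *: (beta *: (B *m (y1 - y0)) + beta *: (B *m (y0 - ys))).
Proof. by move=> b0; rewrite !mulmxBr; apply: vid_By. Qed.
Lemma vB2 (y0 ys : 'cV[R]_p) (beta : R) : beta != 0 ->
  B *m (ys - y0) = - (beta^-1 *: (beta *: (B *m (y0 - ys)))).
Proof. by move=> b0; rewrite !mulmxBr; apply: vid_Bs. Qed.
Lemma vA (xt xs : 'cV[R]_n) (y1 y0 ys : 'cV[R]_p) (b : 'cV[R]_m) (beta : R) :
  beta != 0 -> A *m xs + B *m ys - b = 0 ->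
  A *m (xt - xs) = - (beta^-1 *: ((- beta) *: (A *m xt + B *m y1 - b)
       + beta *: (B *m (y1 - y0)) + beta *: (B *m (y0 - ys)))).
Proof. by move=> b0 h; rewrite !mulmxBr; apply: vid_Ax. Qed.
End VB.
Lemma lin_sw {R : realType} k (a c e : 'cV[R]_k) : a - c = (e - c) + (a - e).
Proof. by apply/matrixP => i j; rewrite !mxE; ring. Qed.
Lemma lin_u {R : realType} k (U X Y : 'cV[R]_k) : (U + X) - Y = U + (X - Y).
Proof. by apply/matrixP => i j; rewrite !mxE; ring. Qed.
Theorem theorem2p9 (R : realType) (n p m : nat)
  (f : 'cV[R]_n -> \bar R) (g : 'cV[R]_p -> \bar R)
  (A : 'M[R]_(m, n)) (B : 'M[R]_(m, p)) (b : 'cV[R]_m)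
  (hf : proper_fun f /\ closed_fun f /\ convex_fun f)
  (hg : proper_fun g /\ closed_fun g /\ convex_fun g)
  (hsol : exists xs ys gs, lagr_sol f g A B b xs ys gs)
  (beta sigt sigh tau theta : R) (G : 'M[R]_n) (H : 'M[R]_p)
  (hbeta : 0 < beta) (hsigt : 0 <= sigt < 1) (hsigh : 0 <= sigh < 1)
  (hG : posdef G) (hH : psd H) (hreg : param_region sigt tau theta)
  (x : nat -> 'cV[R]_n) (y : nat -> 'cV[R]_p) (gam : nat -> 'cV[R]_m)
  (xt : nat -> 'cV[R]_n) (u : nat -> 'cV[R]_n) (gt : nat -> 'cV[R]_m)
  (gh : nat -> 'cV[R]_m)
  (halg : isp_admm f g A B b beta sigt sigh tau theta G H x y gam xt u gt gh)
  (sigma : R) (hsig : sigh <= sigma < 1)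
  (hphi : 0 <= phi sigt tau theta sigma)
  (hphihat : 0 <= phihat sigt tau theta sigma)
  (hphitilde : 0 < phitilde sigt tau theta sigma)
  (hphibar : 0 <= phibar sigt tau theta sigma) :
  let M := Mmat B G H beta tau theta in
  let z := fun k => zvec (x k) (y k) (gam k) in
  let zt := fun k => zvec (xt k) (y k) (gt k) in
  let q := fun k => - beta *: (A *m xt k + B *m y k - b) in
  let d0 := dist0 f g A B b G H beta tau theta (z 0%N) in
  let vt := vartheta sigt tau theta in
  let eta := fun k : nat =>
    if k == 0%N then
      4 * (1 + tau + vt) * phi sigt tau theta sigma
        / ((tau + theta) * (1 + tau) * vt) * d0
    else
      phitilde sigt tau theta sigma / ((tau + theta) * beta) * sqn (q k)
      + phi sigt tau theta sigma / ((tau + theta) * (1 + tau)) * qnorm2 H (y k - y k.-1) in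
  forall k : nat, (1 <= k)%N ->
    qnorm2 M (zt k - z k) + eta k <= sigma * qnorm2 M (zt k - z k.-1) + eta k.-1.
Proof.
move=> M z zt q d0 vt eta k hk.
have gpr : proper_fun g := hg.1.
have gcv : convex_fun g := hg.2.2.
have [HT Hpsd] := hH.
have GT := hG.1.
have [vt0 kap1 u0 t1 hDl] := params sigt tau theta hsigt hreg.
move: (hsigt) (hsigh) (hsig) => /andP[st0 st1] /andP[sh0 sh1] /andP[shs s1].
have [/andP[tm tp] [T0 rg]] := hreg.
have b0' : beta != 0 by rewrite gt_eqF.
have Gu : G \in unitmx := posdef_unit _ _ hG.
have step : forall j, (1 <= j)%N ->
  [/\ gt j - gam j.-1 = q j + beta *: (B *m (y j - y j.-1)),
      gt j - gam j = (1 - (tau + theta)) *: q j + (1 - tau) *: (beta *: (B *m (y j - y j.-1))),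
      subdiff g (y j) (B^T *m (gh j + q j) - H *m (y j - y j.-1)),
      xt j - x j = xt j - x j.-1 + invmx G *m u j &
      B *m (y j - y j.-1) = beta^-1 *: (beta *: (B *m (y j - y j.-1)))].
  move=> j hj; have [hgt hsub herr hgh [hy hx hgam]] := halg j hj.
  split.
  - by rewrite hgt mulmxBr /q; exact: vid_gt.
  - by rewrite hgam hgh hgt mulmxBr /q; exact: vid_gg.
  - have := argmin_subdiff gpr gcv hH (ltW hbeta) hy.
    by rewrite /q scaleNr.
  - by rewrite hx; apply/matrixP => i l; rewrite !mxE; ring.
  - by rewrite scalerA mulVf // scale1r.
have [S1 S2 S3 S4 S5] := step k hk.
have [hgt hsub herr hgh [hy hx hgam]] := halg k hk.
set w := beta *: (B *m (y k - y k.-1)) in S1 S2 S5 *.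
have kn0 : (k == 0%N) = false by rewrite eqn0Ngt hk.
have T0' : tau + theta != 0 by rewrite gt_eqF.
have om0' : 1 + tau != 0 by rewrite gt_eqF //; lra.
have eL : qnorm2 M (zt k - z k) + eta k =
  qnorm2 G (xt k - x k) + 1 / ((tau + theta) * beta) * ((1 - (tau + theta)) ^+ 2 * sqn (q k)
        + 2 * (1 - (tau + theta)) * (1 - tau) * dotv (q k) w
        + (1 - tau) ^+ 2 * sqn w)
  + (phitilde sigt tau theta sigma / ((tau + theta) * beta) * sqn (q k)
     + phi sigt tau theta sigma / ((tau + theta) * (1 + tau)) * qnorm2 H (y k - y k.-1)).
  rewrite /zt /z zvecB subrr /M qnormM qnorm20 mulmx0 sqn0 dotv0l S2 sqn_comb /eta kn0.
  by field; rewrite b0' T0' om0'.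
have eR : sigma * qnorm2 M (zt k - z k.-1) =
  sigma * (qnorm2 G (xt k - x k.-1) + qnorm2 H (y k - y k.-1)
       + ((tau - tau * theta + theta) * beta / (tau + theta)) * (sqn w / beta ^+ 2)
       - 2 * (tau / (tau + theta)) * ((dotv (q k) w
             + sqn w) / beta)
       + 1 / ((tau + theta) * beta) * (sqn (q k) + 2 * dotv (q k) w
             + sqn w)).
  rewrite /zt /z zvecB /M qnormM S1 S5 sqn_scale dotvZl sqn_add dotvDr (dotvC _ _ (q k)).
  by rewrite /sqn; field; rewrite b0' T0'.
rewrite eL eR.
rewrite -S4 S1 sqn_add in herr.
have Gax0 : 0 <= qnorm2 G (xt k - x k.-1) by apply: posdef_psd.
have s0 : 0 <= qnorm2 H (y k - y k.-1) by apply: Hpsd.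
have [k1|k2] : k = 1%N \/ (2 <= k)%N by case: (k) hk => [|[|j]] //= _; [left|right].
  subst k.
  have [hgt1 _ _ hgh1 _] := halg 1%N hk.
  set kap := (1 + tau + vt) / vt.
  have kap0 : 0 < kap := lt_le_trans ltr01 kap1.
  have hdb : beta * qnorm2 H (y 1%N - y 1.-1) - 2 * (1 + tau) * dotv (q 1%N) w
             <= 4 * kap * beta * d0.
    rewrite [4 * kap * beta * d0]mulrC -ler_pdivrMr; last by apply: mulr_gt0 => //; apply: mulr_gt0 => //; lra.
    apply: lb_le_inf.
      have [xs [ys [gs hl]]] := hsol.
      by exists (qnorm2 (Mmat B G H beta tau theta) (zvec xs ys gs - z 0%N)), xs, ys, gs.
    move=> d [xs [ys [gs [[hfx [hgy hAB]] ->]]]].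
    rewrite ler_pdivrMr; last by apply: mulr_gt0 => //; apply: mulr_gt0 => //; lra.
    rewrite [_ * (4 * kap * beta)]mulrC.
    set bb := beta *: (B *m (y 1.-1 - ys)).
    set Gm := gam 1.-1 - gs.
    have eAx : A *m (xt 1%N - xs) = - (beta^-1 *: (q 1%N + w + bb)).
      by rewrite /q /w /bb; apply: vA.
    have egs : gt 1%N - gs = Gm + (q 1%N + w) by rewrite (lin_sw _ (gt 1%N) gs (gam 1.-1)) S1.
    have eu : G *m (x 1.-1 - x 1%N) = u 1%N.
      have -> : x 1.-1 - x 1%N = invmx G *m u 1%N.
        by rewrite hx; apply/matrixP => i l; rewrite !mxE; ring.
      by rewrite mulmxA mulmxV // mul1mx.
    have hF := subdiff_mono hsub hfx.
    rewrite lin_u -mulmxBr dotvDl dotv_trl eAx egs F_expand -eu mulNr in hF.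
    have egh : gh 1%N + q 1%N - gs = Gm + (1 + tau) *: q 1%N + tau *: w.
      by rewrite hgh1 /q /w mulmxBr; apply: vid_gh.
    have eBy : B *m (y 1%N - ys) = beta^-1 *: (w + bb) by rewrite /w /bb; apply: vB1.
    have hG' := subdiff_mono S3 hgy.
    rewrite lin3 -mulmxBr dotvBl dotv_trl eBy egh G_expand (lin_ys _ (y 1%N) (y 1.-1) ys) dotvDr
       opprD addrA in hG'.
    have h3 := three_point _ G (x 1.-1 - xs) (x 1%N - xs) (xt 1%N - xs) GT.
    rewrite !lin_pp in h3.
    have Sy : 0 <= qnorm2 H (y 1.-1 - ys) + dotv (H *m (y 1%N - y 1.-1)) (y 1.-1 - ys)
                   + qnorm2 H (y 1%N - y 1.-1) / 4.
      have := Hpsd ((y 1.-1 - ys) + (1 / 2) *: (y 1%N - y 1.-1)).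
      rewrite qn_lin // (dotv_mull _ _ H) HT (dotvC _ (y 1.-1 - ys)).
      set a1 := qnorm2 H _. set a2 := dotv _ _. set a3 := qnorm2 H (y 1%N - y 1.-1).
      have -> : a1 + 2 * (1 / 2) * a2 + (1 / 2) ^+ 2 * a3 = a1 + a2 + a3 / 4 by field.
      by [].
    have SG := sqn_ge0 _ (Gm + (- tau) *: bb + ((tau + theta) / 2) *: q 1%N).
    rewrite SG_expand in SG.
    have Sb := sqn_ge0 _ (bb + (1 / 2) *: w).
    rewrite Sb_expand in Sb.
    rewrite /z zvecB qnormM (vB2 _ _ B (y 0%N) ys beta b0') (lin_neg _ (x 0%N) xs) qnorm2N
      (lin_neg _ (y 0%N) ys) qnorm2N (lin_neg _ (gam 0%N) gs) ds_expand sqnNs sqnN.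
    have CS : forall a c : R, 0 <= a ^+ 2 * sqn (q 1%N) + 2 * a * c * dotv (q 1%N) w + c ^+ 2 * sqn w.
      by move=> a c; have := sqn_ge0 _ (a *: q 1%N + c *: w); rewrite sqn_comb.
    exact: (@core1a _ beta sigt sigh tau theta kap
      (dotv (G *m (x 1.-1 - x 1%N)) (xt 1%N - xs)) (qnorm2 G (x 1.-1 - xs))
      (qnorm2 G (x 1%N - xs)) (qnorm2 G (xt 1%N - x 1%N)) (qnorm2 G (xt 1%N - x 1.-1))
      (qnorm2 H (y 1%N - y 1.-1)) (qnorm2 H (y 1.-1 - ys))
      (dotv (H *m (y 1%N - y 1.-1)) (y 1.-1 - ys))
      (sqn (q 1%N)) (sqn w) (dotv (q 1%N) w) (sqn Gm) (sqn bb) (dotv Gm (q 1%N))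
      (dotv Gm w) (dotv Gm bb) (dotv (q 1%N) bb) (dotv w bb)
      hbeta sh0 sh1 t1 T0 kap1 u0 hDl hF hG' h3 herr
      (posdef_psd _ _ _ hG) (posdef_psd _ _ _ hG) (posdef_psd _ _ _ hG) s0 Sy SG Sb CS).
  rewrite /eta /=.
  apply: (@core1b _ beta sigt sigh tau theta sigma vt) => //.
  exact: sqn_ge0.
have hk1 : (1 <= k.-1)%N by case: (k) k2 => [|[|j]].
have [S1' S2' S3' S4' S5'] := step k.-1 hk1.
have [hgt' _ _ hgh' [_ _ hgam']] := halg k.-1 hk1.
have hm := subdiff_mono S3 S3'.
rewrite lin4 -!mulmxBr dotvBl dotv_trl in hm.
have emv : gh k + q k - (gh k.-1 + q k.-1) = (1 + tau) *: q k + tau *: w - (1 - theta) *: q k.-1.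
  rewrite hgh hgam' /w mulmxBr /q; exact: vid_mono.
rewrite emv S5 mono_expand [H *m (_ - _)]mulmxBr dotvBl in hm.
have hm' : 0 <= ((1 + tau) * dotv (q k) w + tau * sqn w - (1 - theta) * dotv (q k.-1) w) / beta
     - qnorm2 H (y k - y k.-1) + dotv (H *m (y k.-1 - y k.-1.-1)) (y k - y k.-1).
  move: hm; rewrite /sqn /qnorm2.
  set a1 := dotv (q k) w. set a2 := dotv w w. set a3 := dotv (q k.-1) w.
  set a4 := dotv (H *m (y k - y k.-1)) (y k - y k.-1).
  set a5 := dotv (H *m (y k.-1 - y k.-1.-1)) (y k - y k.-1).
  have -> : beta^-1 * ((1 + tau) * a1 + tau * a2 - (1 - theta) * a3) - (a4 - a5)
         = ((1 + tau) * a1 + tau * a2 - (1 - theta) * a3) / beta - a4 + a5 by field.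
  by [].
have hhd := cs_psd _ H (y k.-1 - y k.-1.-1) (y k - y k.-1) hH.
have kn1 : (k.-1 == 0%N) = false by rewrite eqn0Ngt hk1.
rewrite /eta kn1.
apply: (@core2 _ beta sigt sigh tau theta sigma _ _ _ _ _ _ (dotv (q k.-1) w) _ _ (dotv (H *m (y k.-1 - y k.-1.-1)) (y k - y k.-1)))
  => //; first by lra.
move=> a c; have := sqn_ge0 _ (a *: q k.-1 + c *: w); by rewrite sqn_comb.
Qed.
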